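(* Let $1\le k<N/2$. Any quantum algorithm that, for every unknown $x\in\{0,1\}^N$ with $wt(x)=k$, finds $x$ with bounded error using the quasi B-oracle for $x$ needs $\Omega(k^{1/4})$ queries.
   Context: For $x,q\in\{0,1\}^N$ let $x\wedge q$ be the bitwise AND and $wt$ the Hamming weight. The quasi B-oracle is a stochastic oracle with random answer $\zeta(x;q)\in\{0,1\}$ where $\Pr[\zeta(x;q)=0]=0$ if $wt(x\wedge q)$ is odd, $\Pr[\zeta(x;q)=0]=\sqrt{1/wt(x\wedge q)}$ if $wt(x\wedge q)$ is positive and even, and $\Pr[\zeta(x;q)=0]=1$ if $wt(x\wedge q)=0$. It is accessed through the unitary $\tilde O_x|q,a,z\rangle=\sqrt{\Pr[\zeta(x;q)=0]}\,|q,a,z\rangle+(-1)^a\sqrt{\Pr[\zeta(x;q)=1]}\,|q,a\oplus1,z\rangle$, where $a$ is a one-bit answer register and $z$ a workspace register. Bounded error: output equals $x$ with probability at least a constant such as $2/3$. *)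

(* Defs.v *)
From HB Require Import structures.
From mathcomp Require Import all_boot all_order all_algebra.
From mathcomp Require Import reals.
From mathcomp Require Import complex.
Set Implicit Arguments. Unset Strict Implicit. Unset Printing Implicit Defensive.
Import Order.TTheory GRing.Theory Num.Theory.
Local Open Scope ring_scope.

Definition bits (N : nat) := {ffun 'I_N -> bool}.

Definition wt N (x : bits N) : nat := #|[set i | x i]|.

Definition wtand N (x q : bits N) : nat := #|[set i | x i && q i]|.

(* Pr[zeta(x;q) = 0] for the quasi B-oracle. *)
Definition pr0 (R : realType) N (x q : bits N) : R :=
  let w := wtand x q in
  if odd w then 0
  else if w == 0%N then 1
  else Num.sqrt (w%:R^-1).

(* Basis states |q, a, z> : query register, one-bit answer register,
   workspace register of dimension W.+1 (so that the state |0,0,0> exists). *)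
Definition basis N W := (bits N * bool * 'I_W.+1)%type.

(* Operators on C^{basis}: op s t = <s| U |t>. *)
Definition op (R : realType) N W := basis N W -> basis N W -> R[i].
Definition state (R : realType) N W := basis N W -> R[i].

Definition apply (R : realType) N W (U : op R N W) (v : state R N W) : state R N W :=
  fun s => \sum_(t : basis N W) U s t * v t.

Definition unitary (R : realType) N W (U : op R N W) : Prop :=
  forall s s' : basis N W,
    \sum_(t : basis N W) U s t * conjc (U s' t) = (s == s')%:R.

Definition realC (R : realType) (r : R) : R[i] := Complex r 0.

(* The quasi B-oracle unitary:
   O_x |q,a,z> = sqrt(p0) |q,a,z> + (-1)^a sqrt(p1) |q,a xor 1,z>. *)
Definition qB_oracle (R : realType) N W (x : bits N) : op R N W :=
  fun s t =>
    let: (q', a', z') := s in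
    let: (q, a, z) := t in
    if (q' == q) && (z' == z) then
      if a' == a then realC (Num.sqrt (pr0 R x q))
      else realC ((-1) ^+ a * Num.sqrt (1 - pr0 R x q))
    else 0.

Definition init_state (R : realType) N W : state R N W :=
  fun s => ((s == ([ffun => false], false, ord0)) : bool)%:R.

Fixpoint run (R : realType) N W (x : bits N) (U : nat -> op R N W) (T : nat)
  : state R N W :=
  match T with
  | 0%N => @apply R N W (U 0%N) (@init_state R N W)
  | T'.+1 => @apply R N W (U T) (@apply R N W (@qB_oracle R N W x) (@run R N W x U T'))
  end.

Definition sqnorm (R : realType) (z : R[i]) : R := complex.Re z ^+ 2 + complex.Im z ^+ 2.

(* Probability that measuring the final state in the computational basis and
   post-processing the outcome with [out] yields x. *)
Definition success_prob (R : realType) N W (x : bits N) (U : nat -> op R N W)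
  (T : nat) (out : basis N W -> bits N) : R :=
  \sum_(s : basis N W | out s == x) sqnorm (run x U T s).

(* Main.v *)
Require Import Defs.
From HB Require Import structures.
From mathcomp Require Import all_boot all_order all_algebra.
From mathcomp Require Import reals.
From mathcomp Require Import complex.
From mathcomp Require Import ring lra zify.
Set Implicit Arguments. Unset Strict Implicit. Unset Printing Implicit Defensive.
Import Order.TTheory GRing.Theory Num.Theory.
Local Open Scope ring_scope.

Section U.
Variable R : realType.
Variables N W : nat.
Local Notation T := (basis N W).

Lemma unitary_cols (U : op R N W) : unitary U ->
  forall t t' : T, \sum_(s : T) conjc (U s t) * U s t' = (t == t')%:R.
Proof.
move=> HU t t'.
pose A : 'M[R[i]]_#|{: T}| := \matrix_(i, j) U (enum_val i) (enum_val j).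
pose B : 'M[R[i]]_#|{: T}| := \matrix_(i, j) conjc (U (enum_val j) (enum_val i)).
have AB : A *m B = 1%:M.
  apply/matrixP => i j; rewrite !mxE.
  rewrite (eq_bigr (fun l => U (enum_val i) (enum_val l) * conjc (U (enum_val j) (enum_val l)))); last by move=> l _; rewrite !mxE.
  rewrite -(big_enum_val (fun l => U (enum_val i) l * conjc (U (enum_val j) l))) /=.
  rewrite (eq_bigl predT) // HU.
  by rewrite (inj_eq enum_val_inj).
have BA := mulmx1C AB.
move/matrixP: BA => /(_ (enum_rank t) (enum_rank t')).
rewrite !mxE /= (inj_eq enum_rank_inj) => <-.
rewrite (big_enum_val (fun s => conjc (U s t) * U s t')) /=.
rewrite (eq_bigl predT) //.
by apply: eq_bigr => l _; rewrite !mxE !enum_rankK.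
Qed.
End U.

Section IP.
Variable R : realType.
Variables N W : nat.
Local Notation T := (basis N W).

Definition cip (u v : state R N W) : R[i] := \sum_(s : T) conjc (u s) * v s.
Definition rip (u v : state R N W) : R :=
  \sum_(s : T) (complex.Re (u s) * complex.Re (v s) + complex.Im (u s) * complex.Im (v s)).

Lemma ReD (a b : R[i]) : complex.Re (a + b) = complex.Re a + complex.Re b.
Proof. by case: a; case: b. Qed.

Lemma Re_sum (I : finType) (F : I -> R[i]) :
  complex.Re (\sum_(i : I) F i) = \sum_(i : I) complex.Re (F i).
Proof.
elim/big_rec2: _ => [|i y1 y2 _ <-]; first by [].
by rewrite ReD.
Qed.

Lemma Re_conjM (a b : R[i]) :
  complex.Re (conjc a * b) = complex.Re a * complex.Re b + complex.Im a * complex.Im b.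
Proof. case: a => a1 a2; case: b => b1 b2 /=. ring. Qed.

Lemma Re_cip u v : complex.Re (cip u v) = rip u v.
Proof. by rewrite /cip Re_sum; apply: eq_bigr => s _; rewrite Re_conjM. Qed.

Lemma cip_apply (U : op R N W) u v : unitary U ->
  cip (apply U u) (apply U v) = cip u v.
Proof.
move=> HU; have HC := unitary_cols HU.
rewrite /cip /apply.
transitivity (\sum_(t : T) \sum_(t' : T) conjc (u t) * v t' *
                  \sum_(s : T) conjc (U s t) * U s t').
  rewrite (eq_bigr (fun s => \sum_(t : T) \sum_(t' : T)
       conjc (U s t) * conjc (u t) * (U s t' * v t'))); last first.
    move=> s _; rewrite rmorph_sum /= mulr_suml; apply: eq_bigr => t _.
    by rewrite mulr_sumr rmorphM.
  rewrite exchange_big /=; apply: eq_bigr => t _.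
  rewrite exchange_big /=; apply: eq_bigr => t' _.
  rewrite mulr_sumr; apply: eq_bigr => s _; ring.
apply: eq_bigr => t _.
under eq_bigr => t' _ do rewrite HC.
rewrite (bigD1 t) //= eqxx mulr1 big1 ?addr0 //.
by move=> t' /negbTE nt; rewrite eq_sym nt mulr0.
Qed.

Lemma rip_apply (U : op R N W) u v : unitary U ->
  rip (apply U u) (apply U v) = rip u v.
Proof. by move=> HU; rewrite -!Re_cip cip_apply. Qed.
End IP.

Section Real.
Variable R : realType.

Lemma amgm_vec (r a0 a1 a2 a3 w0 w1 w2 w3 : R) : 0 < r ->
  2 * (a0*w0 + a1*w1 + a2*w2 + a3*w3) <=
  r * (a0^+2 + a1^+2 + a2^+2 + a3^+2) + (w0^+2 + w1^+2 + w2^+2 + w3^+2) / r.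
Proof.
move=> r0.
have H : 0 <= (r*a0 - w0)^+2 + (r*a1 - w1)^+2 + (r*a2 - w2)^+2 + (r*a3 - w3)^+2.
  by rewrite !addr_ge0 // sqr_ge0.
rewrite -(ler_pM2r r0) [X in _ <= X]mulrDl divfK ?gt_eqF //.
have E : (r*a0 - w0)^+2 + (r*a1 - w1)^+2 + (r*a2 - w2)^+2 + (r*a3 - w3)^+2 =
  r * (a0^+2 + a1^+2 + a2^+2 + a3^+2) * r + (w0^+2 + w1^+2 + w2^+2 + w3^+2)
  - 2 * (a0*w0 + a1*w1 + a2*w2 + a3*w3) * r by ring.
lra.
Qed.

Lemma key_real (c1 s1 c2 s2 a0 a1 a2 a3 b0 b1 b2 b3 r r' : R) :
  0 <= r -> 0 <= r' ->
  ((c1*c2+s1*s2) - 1)^+2 + (s1*c2 - c1*s2)^+2 <= r * r' ->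
  2 * `| ((c1*a0 - s1*a1)*(c2*b0 - s2*b1) + (c1*a1 + s1*a0)*(c2*b1+s2*b0) - (a0*b0 + a1*b1))
       + ((c1*a2 - s1*a3)*(c2*b2 - s2*b3) + (c1*a3 + s1*a2)*(c2*b3+s2*b2) - (a2*b2 + a3*b3)) |
  <= r * (a0^+2 + a1^+2 + a2^+2 + a3^+2) + r' * (b0^+2 + b1^+2 + b2^+2 + b3^+2).
Proof.
move=> r0 r'0 HD.
set C := c1*c2+s1*s2; set S := s1*c2 - c1*s2.
set w0 := (C-1)*b0 + S*b1; set w1 := (C-1)*b1 - S*b0.
set w2 := (C-1)*b2 + S*b3; set w3 := (C-1)*b3 - S*b2.
have -> : ((c1*a0 - s1*a1)*(c2*b0 - s2*b1) + (c1*a1 + s1*a0)*(c2*b1+s2*b0) - (a0*b0 + a1*b1))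
       + ((c1*a2 - s1*a3)*(c2*b2 - s2*b3) + (c1*a3 + s1*a2)*(c2*b3+s2*b2) - (a2*b2 + a3*b3))
    = a0*w0 + a1*w1 + a2*w2 + a3*w3 by rewrite /w0 /w1 /w2 /w3 /C /S; ring.
have Hw : w0^+2 + w1^+2 + w2^+2 + w3^+2 = ((C-1)^+2 + S^+2) * (b0^+2 + b1^+2 + b2^+2 + b3^+2).
  by rewrite /w0 /w1 /w2 /w3; ring.
set D := (C-1)^+2 + S^+2 in HD Hw.
set B := b0^+2 + b1^+2 + b2^+2 + b3^+2 in Hw *.
have B0 : 0 <= B by rewrite /B !addr_ge0 // sqr_ge0.
have D0 : 0 <= D by rewrite /D addr_ge0 // sqr_ge0.
have A0 : 0 <= a0^+2 + a1^+2 + a2^+2 + a3^+2 by rewrite !addr_ge0 // sqr_ge0.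
case: (ltrgt0P r) r0 HD => // [rp|->] _ HD; last first.
  have D00 : D = 0 by apply/le_anti; rewrite D0 andbT; move: HD; rewrite mul0r.
  have w00 : w0^+2 + w1^+2 + w2^+2 + w3^+2 = 0 by rewrite Hw D00 mul0r.
  have z0 : w0 = 0 /\ w1 = 0 /\ w2 = 0 /\ w3 = 0.
    have := sqr_ge0 w0; have := sqr_ge0 w1; have := sqr_ge0 w2; have := sqr_ge0 w3.
    move=> h3 h2 h1 h0.
    split; [|split; [|split]]; apply/eqP; rewrite -sqrf_eq0 eq_le sqr_ge0 andbT; lra.
  case: z0 => -> [-> [-> ->]]; rewrite !mulr0 !addr0 normr0 mulr0.
  by rewrite mul0r add0r mulr_ge0.
have HwB : (w0^+2 + w1^+2 + w2^+2 + w3^+2) / r <= r' * B.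
  rewrite Hw ler_pdivrMr //.
  have : D * B <= (r * r') * B by rewrite ler_wpM2r.
  by rewrite [r' * B * r]mulrC mulrA.
have h1 := amgm_vec a0 a1 a2 a3 w0 w1 w2 w3 rp.
have h2 := amgm_vec (-a0) (-a1) (-a2) (-a3) w0 w1 w2 w3 rp.
rewrite !sqrrN in h2.
have [e|e] := lerP 0 (a0*w0 + a1*w1 + a2*w2 + a3*w3).
  rewrite ger0_norm //; lra.
rewrite ltr0_norm //; lra.
Qed.
End Real.


Section Oracle.
Variable R : realType.
Variables N W : nat.
Local Notation T := (basis N W).

Definition realC' (r : R) : R[i] := realC r.

Lemma sum_if_eq (F : T -> R[i]) (s0 : T) :
  \sum_(t : T) (if t == s0 then F t else 0) = F s0.
Proof. by rewrite -big_mkcond big_pred1_eq. Qed.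

Lemma oracle_apply (x : bits N) (u : state R N W) q a z :
  apply (qB_oracle R x) u (q, a, z) =
    realC (Num.sqrt (pr0 R x q)) * u (q, a, z) +
    realC ((-1) ^+ (~~ a) * Num.sqrt (1 - pr0 R x q)) * u (q, ~~ a, z).
Proof.
rewrite /apply.
rewrite (eq_bigr (fun t => (if t == (q, a, z) then realC (Num.sqrt (pr0 R x q)) * u t else 0) +
   (if t == (q, ~~ a, z) then realC ((-1) ^+ (~~ a) * Num.sqrt (1 - pr0 R x q)) * u t else 0))).
  by rewrite big_split /= !sum_if_eq.
move=> [[q' a'] z'] _ /=.
rewrite !xpair_eqE.
case: (eqVneq q q') => [<-|nq]; last first.
  by rewrite /= mul0r addr0.
case: (eqVneq z z') => [<-|nz]; last first.
  by rewrite ?andbF /= mul0r addr0.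
by case: a; case: a' => /=; rewrite ?mul0r ?addr0 ?add0r.
Qed.

Lemma ReM_real (r : R) (c : R[i]) : complex.Re (realC r * c) = r * complex.Re c.
Proof. by case: c => c1 c2 /=; ring. Qed.
Lemma ImM_real (r : R) (c : R[i]) : complex.Im (realC r * c) = r * complex.Im c.
Proof. by case: c => c1 c2 /=; ring. Qed.
Lemma ImD (a b : R[i]) : complex.Im (a + b) = complex.Im a + complex.Im b.
Proof. by case: a; case: b. Qed.

Lemma sum_basis (F : T -> R) :
  \sum_(s : T) F s = \sum_(q : bits N) \sum_(z : 'I_W.+1) (F (q, false, z) + F (q, true, z)).
Proof.
rewrite (eq_bigr (fun s : T => F (s.1, s.2))); last by case.
rewrite -(pair_bigA _ (fun p z => F (p, z))) /=.
rewrite (eq_bigr (fun p : bits N * bool => \sum_(z : 'I_W.+1) F ((p.1, p.2), z))); last by case.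
rewrite -(pair_bigA _ (fun q a => \sum_(z : 'I_W.+1) F ((q, a), z))) /=.
apply: eq_bigr => q _.
by rewrite big_bool /= -big_split /= ; apply: eq_bigr => z _; rewrite addrC.
Qed.
End Oracle.

Section Step.
Variable R : realType.
Variables N W : nat.
Local Notation T := (basis N W).

Definition Bl (u : state R N W) (q : bits N) (z : 'I_W.+1) : R :=
  sqnorm (u (q, false, z)) + sqnorm (u (q, true, z)).

Definition Dp (p1 p2 : R) : R :=
  let c1 := Num.sqrt p1 in let s1 := Num.sqrt (1 - p1) in
  let c2 := Num.sqrt p2 in let s2 := Num.sqrt (1 - p2) in
  ((c1*c2 + s1*s2) - 1)^+2 + (s1*c2 - c1*s2)^+2.

Lemma norm2_sum (I J : finType) (F G : I -> J -> R) :
  (forall i j, 2 * `|F i j| <= G i j) ->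
  2 * `|\sum_(i : I) \sum_(j : J) F i j| <= \sum_(i : I) \sum_(j : J) G i j.
Proof.
move=> H.
apply: (le_trans (y := 2 * \sum_(i : I) \sum_(j : J) `|F i j|)).
  rewrite ler_pM2l //; apply: (le_trans (ler_norm_sum _ _ _)).
  by apply: ler_sum => i _; apply: ler_norm_sum.
rewrite mulr_sumr; apply: ler_sum => i _.
by rewrite mulr_sumr; apply: ler_sum => j _.
Qed.

Lemma oracle_step (x y : bits N) (u v : state R N W) (rho rho' : bits N -> R) :
  (forall q, 0 <= rho q) -> (forall q, 0 <= rho' q) ->
  (forall q, Dp (pr0 R x q) (pr0 R y q) <= rho q * rho' q) ->
  2 * `|rip (apply (qB_oracle R x) u) (apply (qB_oracle R y) v) - rip u v| <=
   \sum_(q : bits N) \sum_(z : 'I_W.+1) (rho q * Bl u q z + rho' q * Bl v q z).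
Proof.
move=> r0 r'0 HD.
rewrite /rip -sumrB sum_basis.
apply: norm2_sum => q z.
rewrite !oracle_apply /Bl /sqnorm !(ReD, ImD, ReM_real, ImM_real) /=.
have := HD q; rewrite /Dp.
set c1 := Num.sqrt (pr0 R x q); set s1 := Num.sqrt (1 - pr0 R x q).
set c2 := Num.sqrt (pr0 R y q); set s2 := Num.sqrt (1 - pr0 R y q).
set a0 := complex.Re (u (q, false, z)); set a1 := complex.Re (u (q, true, z)).
set a2 := complex.Im (u (q, false, z)); set a3 := complex.Im (u (q, true, z)).
set b0 := complex.Re (v (q, false, z)); set b1 := complex.Re (v (q, true, z)).
set b2 := complex.Im (v (q, false, z)); set b3 := complex.Im (v (q, true, z)).
move=> hD.
have K := @key_real R c1 s1 c2 s2 a0 a1 a2 a3 b0 b1 b2 b3 (rho q) (rho' q) (r0 q) (r'0 q) hD.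
rewrite expr1 expr0.
move: K; congr (_ <= _).
- congr (_ * `|_|); ring.
- ring.
Qed.
End Step.

Section Num.
Variable R : realType.

Definition pw (w : nat) : R :=
  if odd w then 0 else if w == 0%N then 1 else Num.sqrt (w%:R^-1).

Lemma pr0_pw N (x q : bits N) : pr0 R x q = pw (wtand x q).
Proof. by []. Qed.

Lemma pw_ge0 w : 0 <= pw w.
Proof. by rewrite /pw; case: odd => //; case: eqP => // _; exact: sqrtr_ge0. Qed.

Lemma pw_le1 w : pw w <= 1.
Proof.
rewrite /pw; case: odd => //; case: eqP => // /eqP w0.
have w1 : (1 <= w)%N by rewrite lt0n.
rewrite -[X in _ <= X]sqrtr1 ler_sqrt // invf_le1 ?ler1n ?ltr0n //.
Qed.

Lemma Dp_sym (p1 p2 : R) : Dp p1 p2 = Dp p2 p1.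
Proof. rewrite /Dp; ring. Qed.

Lemma Dp_same (p : R) : 0 <= p <= 1 -> Dp p p = 0.
Proof.
case/andP=> p0 p1; rewrite /Dp.
rewrite -!expr2 !sqr_sqrtr ?subr_ge0 //.
have -> : p + (1 - p) - 1 = 0 by ring.
rewrite mulrC subrr; ring.
Qed.

Lemma D0p_le (p : R) : 0 <= p <= 1 -> Dp 0 p <= 2 * p.
Proof.
case/andP=> p0 p1; rewrite /Dp sqrtr0 subr0 sqrtr1.
have hs' : Num.sqrt (1 - p) ^+ 2 = 1 - p by rewrite sqr_sqrtr // subr_ge0.
have hc := sqr_sqrtr p0.
have s0 := sqrtr_ge0 (1 - p).
set s := Num.sqrt (1 - p) in hs' s0 *; set c := Num.sqrt p in hc *.
have : 1 - p <= s.
  have s1 : s <= 1 by rewrite /s -[X in _ <= X]sqrtr1 ler_sqrt //; lra.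
  nra.
move=> h.
have -> : (0 * c + 1 * s - 1) ^+ 2 + (1 * c - 0 * s) ^+ 2 = s^+2 + c^+2 - 2 * s + 1 by ring.
rewrite hs' hc; lra.
Qed.

Lemma sqrt_inv_mul (a : R) : 0 < a -> Num.sqrt (a^-1) * Num.sqrt a = 1.
Proof.
move=> a0; by rewrite -sqrtrM ?invr_ge0 ?ltW // mulVf ?gt_eqF // ?sqrtr1.
Qed.

Lemma Dp_adj a : Dp (pw a) (pw a.+1) * Num.sqrt (a.+1%:R) <= 4.
Proof.
have pr : forall w, 0 <= pw w <= 1 by move=> w; rewrite pw_ge0 pw_le1.
have sq0 := sqrtr_ge0 (a.+1%:R : R).
case: (boolP (odd a)) => ha.
  have e0 : pw a = 0 by rewrite /pw ha.
  have e1 : pw a.+1 = Num.sqrt (a.+1%:R^-1) by rewrite /pw /= ha.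
  rewrite e0; apply: (le_trans (ler_wpM2r sq0 (D0p_le (pr a.+1)))).
  rewrite e1 -mulrA sqrt_inv_mul ?ltr0n //; lra.
have e1 : pw a.+1 = 0 by rewrite /pw /= ha.
rewrite e1 Dp_sym; apply: (le_trans (ler_wpM2r sq0 (D0p_le (pr a)))).
case: (eqVneq a 0%N) => [->|an0].
  rewrite /pw /= sqrtr1; lra.
have e0 : pw a = Num.sqrt (a%:R^-1) by rewrite /pw (negbTE ha) (negbTE an0).
rewrite e0 -mulrA -sqrtrM ?invr_ge0 ?ler0n //.
have ap : (0 : R) < a%:R by rewrite ltr0n lt0n.
have t4 : a%:R^-1 * a.+1%:R <= 4 :> R.
  rewrite mulrC -ler_pdivlMr ?invr_gt0 // invrK.
  have : (1 <= a)%N by rewrite lt0n.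
  rewrite -(ler_nat R) => h; rewrite -natr1; lra.
have t0 : 0 <= a%:R^-1 * a.+1%:R :> R by rewrite mulr_ge0 ?invr_ge0 ?ler0n.
have hs := sqr_sqrtr t0.
have s0 := sqrtr_ge0 (a%:R^-1 * a.+1%:R : R).
set s := Num.sqrt _ in hs s0 *.
have : s <= 2 by nra.
lra.
Qed.
End Num.

Local Close Scope ring_scope.

Section Comb.
Variable N : nat.
Implicit Types (x q : bits N) (i j l : 'I_N) (P : pred 'I_N).

Definition sw (x : bits N) (i j : 'I_N) : bits N :=
  [ffun l => if l == i then false else if l == j then true else x l].
Definition ncomp (x : bits N) : bits N := [ffun l => ~~ x l].
Definition cnt (x : bits N) (P : pred 'I_N) : nat := #|[set l | x l && P l]|.

Lemma cntE x P : cnt x P = \sum_(l : 'I_N) ((x l && P l) : nat).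
Proof.
rewrite /cnt cardsE -sum1_card big_mkcond /=.
by apply: eq_bigr => l _; rewrite unfold_in; case: (x l && P l).
Qed.

Lemma sw_neq x i j : x i -> ~~ x j -> i != j.
Proof. by move=> xi nxj; apply/eqP => e; move: nxj; rewrite -e xi. Qed.

Lemma sum2 (F : 'I_N -> nat) i j : i != j ->
  \sum_l F l = (F i + F j + \sum_(l | (l != i) && (l != j)) F l)%N.
Proof.
move=> nij; rewrite (bigD1 i) //= (bigD1 j) /=; last by rewrite eq_sym.
by rewrite addnA.
Qed.

Lemma cnt_sw x i j P : x i -> ~~ x j ->
  (cnt (sw x i j) P + P i = cnt x P + P j)%N.
Proof.
move=> xi nxj; have nij := sw_neq xi nxj.
rewrite !cntE (sum2 (fun l => (sw x i j l && P l) : nat) nij) (sum2 (fun l => (x l && P l) : nat) nij) /=.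
rewrite !ffunE eqxx eq_sym (negbTE nij) eqxx xi (negbTE nxj) /=.
have -> : \sum_(l < N | (l != i) && (l != j)) ((sw x i j l && P l) : nat) =
          \sum_(l < N | (l != i) && (l != j)) ((x l && P l) : nat).
  by apply: eq_bigr => l /andP [li lj]; rewrite ffunE (negbTE li) (negbTE lj).
set S := (\sum_(_ < N | _) _); case: (P i); case: (P j); rewrite /=; lia.
Qed.

Lemma ncomp_sw x i j : x i -> ~~ x j -> ncomp (sw x i j) = sw (ncomp x) j i.
Proof.
move=> xi nxj; have nij := sw_neq xi nxj.
apply/ffunP => l; rewrite !ffunE.
case: (eqVneq l i) => [->|li]; first by rewrite (negbTE nij).
by case: (eqVneq l j).
Qed.

Lemma sw_swK x i j : x i -> ~~ x j -> sw (sw x i j) j i = x.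
Proof.
move=> xi nxj; have nij := sw_neq xi nxj.
apply/ffunP => l; rewrite !ffunE.
case: (eqVneq l j) => [->|lj]; first by rewrite (negbTE nxj).
case: (eqVneq l i) => [->|li] //.
Qed.

Lemma sw_j x i j : x i -> ~~ x j -> sw x i j j.
Proof. by move=> xi nxj; rewrite ffunE eq_sym (negbTE (sw_neq xi nxj)) eqxx. Qed.
Lemma sw_i x i j : ~~ sw x i j i.
Proof. by rewrite ffunE eqxx. Qed.

Lemma wt_cnt x : wt x = cnt x predT.
Proof. by rewrite /wt /cnt; apply: eq_card => l; rewrite !inE andbT. Qed.
Lemma wtand_cnt x q : wtand x q = cnt x (fun l => q l).
Proof. by []. Qed.
Lemma cnt_ncomp x P : cnt (ncomp x) P = #|[set l | ~~ x l && P l]|.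
Proof. by rewrite /cnt; apply: eq_card => l; rewrite !inE ffunE. Qed.

Lemma cnt_split x P : (cnt x P + cnt x (predC P) = cnt x predT)%N.
Proof.
rewrite !cntE -big_split /=; apply: eq_bigr => l _.
by case: (x l); case: (P l).
Qed.
Lemma cnt_xsplit x P : (cnt x P + cnt (ncomp x) P = cnt [ffun => true] P)%N.
Proof.
rewrite !cntE -big_split /=; apply: eq_bigr => l _.
by rewrite !ffunE; case: (x l); case: (P l).
Qed.
Lemma cnt_all : cnt [ffun => true] predT = N.
Proof.
rewrite cntE (eq_bigr (fun _ => 1%N)) ?sum1_card ?card_ord // => l _; by rewrite ffunE.
Qed.
End Comb.

Local Open Scope ring_scope.

Section NumL.
Variable R : realType.

Lemma le_sqr_ge0 (a b : R) : 0 <= a -> 0 <= b -> a^+2 <= b^+2 -> a <= b.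
Proof. move=> a0 b0 h; nra. Qed.

Lemma De_le (D e : R) : 0 <= e -> D * Num.sqrt e <= 4 -> D * e <= 4 * Num.sqrt e.
Proof.
move=> e0 h; have hs := sqr_sqrtr e0; have s0 := sqrtr_ge0 e.
set s := Num.sqrt e in hs h s0 *.
rewrite -hs; nra.
Qed.

Lemma lemL (P Q P' Q' D K M : R) : 0 < P -> 0 < Q -> 0 <= P' -> 0 <= Q' -> 0 <= D ->
  0 < K -> 0 <= M ->
  D * P * P' <= 4 * K * Num.sqrt K -> Q * Q' <= M^+2 ->
  P * Q * Num.sqrt D * Num.sqrt (P' * Q' / (P * Q)) <= 2 / Num.sqrt (Num.sqrt K) * (K * M).
Proof.
move=> P0 Q0 P'0 Q'0 D0 K0 M0 h1 h2.
have sK0 : 0 < Num.sqrt K by rewrite sqrtr_gt0.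
have ssK0 : 0 < Num.sqrt (Num.sqrt K) by rewrite sqrtr_gt0.
have hK : Num.sqrt K ^+ 2 = K by rewrite sqr_sqrtr // ltW.
have hsK : Num.sqrt (Num.sqrt K) ^+ 2 = Num.sqrt K by rewrite sqr_sqrtr // ltW.
have PQ0 : 0 < P * Q by rewrite mulr_gt0.
have fr0 : 0 <= P' * Q' / (P * Q) by rewrite divr_ge0 // ?mulr_ge0 // ltW.
apply: le_sqr_ge0.
- by rewrite !mulr_ge0 ?sqrtr_ge0 // ltW.
- by rewrite !mulr_ge0 ?sqrtr_ge0 // ?ltW // invr_gt0.
rewrite !exprMn !sqr_sqrtr // exprVn hsK.
have -> : P ^+ 2 * Q ^+ 2 * D * (P' * Q' / (P * Q)) = (D * P * P') * (Q * Q').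
  by field; rewrite !gt_eqF.
have -> : 2 ^+ 2 / Num.sqrt K * (K ^+ 2 * M ^+ 2) = (4 * K * Num.sqrt K) * M^+2.
  have e : K ^+ 2 = K * Num.sqrt K ^+ 2 by rewrite hK expr2.
  by rewrite e; field; rewrite gt_eqF.
apply: ler_pM => //; rewrite ?mulr_ge0 // ltW //.
Qed.
End NumL.

Section Flow.
Variable R : realType.
Variable N : nat.
Implicit Types (x q : bits N) (i j l : 'I_N) (P : pred 'I_N).

Lemma sum_const_card P (c : R) : \sum_(j | P j) c = (#|[set j | P j]|)%:R * c.
Proof.
rewrite (eq_bigl (fun j => j \in [set j | P j])); last by move=> j; rewrite inE.
by rewrite sumr_const mulr_natl.
Qed.

Lemma sum_cat (F : 'I_N -> 'I_N -> R) (a b c d : pred 'I_N) (c0 : R) :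
  (forall i j, a i -> b i -> c j -> d j -> F i j = c0) ->
  \sum_(i | a i) \sum_(j | c j) (if b i && d j then F i j else 0) =
    ((#|[set i | a i && b i]| * #|[set j | c j && d j]|)%N)%:R * c0.
Proof.
move=> H.
rewrite (bigID b) /= [X in _ + X]big1 ?addr0; last first.
  by move=> i /andP [_ /negbTE ->]; rewrite big1.
rewrite (eq_bigr (fun i => \sum_(j | c j && d j) c0)); last first.
  move=> i /andP [ai bi]; rewrite (bigID d) /= [X in _ + X]big1 ?addr0; last first.
    by move=> j /andP [_ /negbTE ->]; rewrite andbF.
  by apply: eq_bigr => j /andP [cj dj]; rewrite bi dj H.
rewrite sum_const_card sum_const_card mulrA natrM; congr (_ * _ * _).
Qed.

Lemma cnt_ext x P P' : (forall l, P l = P' l) -> cnt x P = cnt x P'.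
Proof. by move=> h; rewrite /cnt; apply: eq_card => l; rewrite !inE h. Qed.

Lemma cnt_pos x P l : x l -> P l -> (0 < cnt x P)%N.
Proof. by move=> xl pl; apply/card_gt0P; exists l; rewrite inE xl pl. Qed.
End Flow.

Section F.
Variable R : realType.
Variable N : nat.
Implicit Types (x q : bits N) (i j l : 'I_N) (P : pred 'I_N).

Definition pq q : pred 'I_N := fun l => q l.
Definition nq q : pred 'I_N := fun l => ~~ q l.
Definition down x q : R := ((cnt x (pq q) * cnt (ncomp x) (nq q))%N)%:R.
Definition up x q : R := ((cnt x (nq q) * cnt (ncomp x) (pq q))%N)%:R.
Definition fD x y q : R := Num.sqrt (Dp (pr0 R x q) (pr0 R y q)).
Definition ff x i j q : R :=
  (if q i && ~~ q j then fD x (sw x i j) q * Num.sqrt (up (sw x i j) q / down x q) else 0) +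
  (if ~~ q i && q j then fD x (sw x i j) q * Num.sqrt (down (sw x i j) q / up x q) else 0).

Lemma Dp_ge0 (p1 p2 : R) : 0 <= Dp p1 p2.
Proof. by rewrite /Dp addr_ge0 ?sqr_ge0. Qed.

Lemma ff_ge0 x i j q : 0 <= ff x i j q.
Proof.
by rewrite /ff addr_ge0 //; case: ifP => _ //; rewrite mulr_ge0 ?sqrtr_ge0.
Qed.

Lemma sqrt_frac (a b : R) : 0 < a -> 0 < b -> Num.sqrt (a / b) * Num.sqrt (b / a) = 1.
Proof.
move=> a0 b0; rewrite -sqrtrM ?divr_ge0 ?ltW //.
by rewrite mulrA divfK ?gt_eqF // mulfV ?gt_eqF // sqrtr1.
Qed.

Lemma fD_sym x y q : fD x y q = fD y x q.
Proof. by rewrite /fD Dp_sym. Qed.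

Lemma fD_sq x y q : fD x y q * fD x y q = Dp (pr0 R x q) (pr0 R y q).
Proof. by rewrite /fD -expr2 sqr_sqrtr // Dp_ge0. Qed.

Lemma pr0_range x q : 0 <= pr0 R x q <= 1.
Proof. by rewrite pr0_pw pw_ge0 pw_le1. Qed.

Lemma ncompE x l : ncomp x l = ~~ x l.
Proof. by rewrite ffunE. Qed.

Lemma prod_ff x i j q : x i -> ~~ x j ->
  Dp (pr0 R x q) (pr0 R (sw x i j) q) <= ff x i j q * ff (sw x i j) j i q.
Proof.
move=> xi nxj.
have K := sw_swK xi nxj.
have yj : sw x i j j := sw_j xi nxj.
have nyi : ~~ sw x i j i := sw_i x i j.
rewrite /ff K.
case qi: (q i); case qj: (q j) => /=; rewrite ?addr0 ?add0r.
- have e := cnt_sw (pq q) xi nxj; rewrite /pq qi qj in e.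
  have E : pr0 R (sw x i j) q = pr0 R x q.
  rewrite !pr0_pw /wtand; congr pw; move: e; rewrite /cnt /= ; lia.
  by rewrite E Dp_same ?pr0_range // mulr0.
- rewrite mulrACA (fD_sym (sw x i j) x) fD_sq.
  by rewrite sqrt_frac ?mulr1 ?lexx // /up /down ltr0n muln_gt0; apply/andP; split; first [
  by apply: (cnt_pos (l := i)); rewrite /nq /pq ?ncompE ?qi ?qj ?nyi ?yj ?xi ?nxj
| by apply: (cnt_pos (l := j)); rewrite /nq /pq ?ncompE ?qi ?qj ?nyi ?yj ?xi ?nxj ].
- rewrite mulrACA (fD_sym (sw x i j) x) fD_sq.
  by rewrite sqrt_frac ?mulr1 ?lexx // /up /down ltr0n muln_gt0; apply/andP; split; first [
  by apply: (cnt_pos (l := i)); rewrite /nq /pq ?ncompE ?qi ?qj ?nyi ?yj ?xi ?nxj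
| by apply: (cnt_pos (l := j)); rewrite /nq /pq ?ncompE ?qi ?qj ?nyi ?yj ?xi ?nxj ].
- have e := cnt_sw (pq q) xi nxj; rewrite /pq qi qj in e.
  have E : pr0 R (sw x i j) q = pr0 R x q.
  rewrite !pr0_pw /wtand; congr pw; move: e; rewrite /cnt /= ; lia.
  by rewrite E Dp_same ?pr0_range // mulr0.
Qed.
End F.

Section GenNum.
Variable R : realType.

Lemma gen_num (P P' Q Q' e K M : nat) (D : R) :
  (0 < P)%N -> (0 < Q)%N -> (0 < K)%N -> 0 <= D ->
  D * Num.sqrt (e%:R) <= 4 -> (e <= K)%N -> (P * P' <= e * K)%N -> (Q * Q' <= M * M)%N ->
  ((P * Q)%N)%:R * (Num.sqrt D * Num.sqrt (((P' * Q')%N)%:R / ((P * Q)%N)%:R))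
    <= 2 / Num.sqrt (Num.sqrt (K%:R)) * (K%:R * M%:R).
Proof.
move=> P0 Q0 K0 D0 hD eK hP hQ.
rewrite !natrM mulrA.
apply: lemL; rewrite ?ltr0n ?ler0n //.
- have e0 : (0 : R) <= e%:R by rewrite ler0n.
  have h1 := De_le e0 hD.
  have hP' : (P%:R * P'%:R : R) <= e%:R * K%:R by rewrite -!natrM ler_nat.
  have sK : Num.sqrt (e%:R) <= Num.sqrt (K%:R : R) by rewrite ler_sqrt ?ler0n // ler_nat.
  have s0 := sqrtr_ge0 (e%:R : R).
  have KK : (0 : R) <= K%:R by rewrite ler0n.
  have PP : (0 : R) <= P%:R * P'%:R by rewrite -natrM ler0n.
  have : D * (P%:R * P'%:R) <= D * (e%:R * K%:R) by rewrite ler_wpM2l.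
  have : D * e%:R * K%:R <= 4 * Num.sqrt e%:R * K%:R by rewrite ler_wpM2r.
  have : 4 * Num.sqrt (e%:R) * K%:R <= 4 * Num.sqrt (K%:R) * K%:R :> R.
    by rewrite ler_wpM2r // ler_wpM2l.
  rewrite !mulrA; lra.
- by rewrite -natrM expr2 -natrM ler_nat.
Qed.
End GenNum.

Section Bound.
Variable R : realType.
Variable N : nat.
Implicit Types (x q : bits N) (i j l : 'I_N) (P : pred 'I_N).

Lemma sum_ff_bound x q : (0 < cnt x predT)%N ->
  \sum_(i | x i) \sum_(j | ~~ x j) ff R x i j q <=
    4 / Num.sqrt (Num.sqrt ((cnt x predT)%:R)) * ((cnt x predT)%:R * (cnt (ncomp x) predT)%:R).
Proof.
move=> K0.
set K := cnt x predT; set M := cnt (ncomp x) predT.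
set A1 := cnt x (pq q); set A2 := cnt x (nq q).
set A3 := cnt (ncomp x) (pq q); set A4 := cnt (ncomp x) (nq q).
have e12 : (A1 + A2 = K)%N.
  by rewrite /A1 /A2 /K -(cnt_split x (pq q)); congr (_ + _)%N; apply: cnt_ext.
have e34 : (A3 + A4 = M)%N.
  by rewrite /A3 /A4 /M -(cnt_split (ncomp x) (pq q)); congr (_ + _)%N; apply: cnt_ext.
rewrite /ff.
under eq_bigr => i _ do rewrite big_split /=.
rewrite big_split /=.
have -> : 4 / Num.sqrt (Num.sqrt (K%:R)) * (K%:R * M%:R) =
   2 / Num.sqrt (Num.sqrt (K%:R)) * (K%:R * M%:R) + 2 / Num.sqrt (Num.sqrt (K%:R)) * (K%:R * M%:R) :> R.
  by rewrite -mulrDl -mulrDl; congr (_ / _ * _); rewrite -natrD.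
apply: lerD.
- rewrite (@sum_cat R N _ (fun i => x i) (fun i => q i) (fun j => ~~ x j) (fun j => ~~ q j)
    (Num.sqrt (Dp (pw R A1) (pw R (A1.-1))) *
     Num.sqrt (((A2.+1 * A3.+1)%N)%:R / ((A1 * A4)%N)%:R))); last first.
    move=> i j xi qi nxj nqj.
    have h1 := cnt_sw (pq q) xi nxj.
    have h2 := cnt_sw (nq q) xi nxj.
    have nxi : ~~ ncomp x i by rewrite ncompE xi.
    have nxj' : ncomp x j by rewrite ncompE.
    have h3 := cnt_sw (pq q) nxj' nxi.
    rewrite -(ncomp_sw xi nxj) in h3.
    rewrite /pq /nq qi (negbTE nqj) /= in h1 h2 h3.
    have w1 : wtand (sw x i j) q = A1.-1.
      move: h1; rewrite /cnt /wtand /A1 /cnt /pq; lia.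
    rewrite /fD !pr0_pw w1; congr (_ * Num.sqrt (_ / _)).
    rewrite /up; congr (_%:R); congr (_ * _)%N.
      move: h2; rewrite /A2 /nq; lia.
    move: h3; rewrite /A3 /pq; lia.
  have -> : #|[set i | x i && q i]| = A1 by [].
  have -> : #|[set j | ~~ x j && ~~ q j]| = A4 by rewrite /A4 cnt_ncomp.
  have [A10|A1p] := posnP A1.
    by rewrite A10 mul0n mul0r mulr_ge0 // ?divr_ge0 ?sqrtr_ge0 ?mulr_ge0 ?ler0n.
  have [A40|A4p] := posnP A4.
    by rewrite A40 muln0 mul0r mulr_ge0 // ?divr_ge0 ?sqrtr_ge0 ?mulr_ge0 ?ler0n.
  apply: (gen_num (e := A1)) => //; first exact: Dp_ge0.
  - have := Dp_adj R A1.-1; rewrite prednK // Dp_sym //.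
  - lia.
  - nia.
  - nia.
rewrite (@sum_cat R N _ (fun i => x i) (fun i => ~~ q i) (fun j => ~~ x j) (fun j => q j)
    (Num.sqrt (Dp (pw R A1) (pw R (A1.+1))) *
     Num.sqrt (((A1.+1 * A4.+1)%N)%:R / ((A2 * A3)%N)%:R))); last first.
  move=> i j xi nqi nxj qj.
  have h1 := cnt_sw (pq q) xi nxj.
  have nxi : ~~ ncomp x i by rewrite ncompE xi.
  have nxj' : ncomp x j by rewrite ncompE.
  have h3 := cnt_sw (nq q) nxj' nxi.
  rewrite -(ncomp_sw xi nxj) in h3.
  rewrite /pq /nq qj (negbTE nqi) /= in h1 h3.
  have w1 : wtand (sw x i j) q = A1.+1.
    move: h1; rewrite /cnt /wtand /A1 /cnt /pq; lia.
  rewrite /fD !pr0_pw w1; congr (_ * Num.sqrt (_ / _)).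
  rewrite /down; congr (_%:R); congr (_ * _)%N.
    move: h1; rewrite /A1 /pq /cnt /wtand; lia.
  move: h3; rewrite /A4 /nq; lia.
have -> : #|[set i | x i && ~~ q i]| = A2 by [].
have -> : #|[set j | ~~ x j && q j]| = A3 by rewrite /A3 cnt_ncomp.
have [A20|A2p] := posnP A2.
  by rewrite A20 mul0n mul0r mulr_ge0 // ?divr_ge0 ?sqrtr_ge0 ?mulr_ge0 ?ler0n.
have [A30|A3p] := posnP A3.
  by rewrite A30 muln0 mul0r mulr_ge0 // ?divr_ge0 ?sqrtr_ge0 ?mulr_ge0 ?ler0n.
apply: (gen_num (e := A1.+1)) => //; first exact: Dp_ge0.
- exact: Dp_adj.
- lia.
- nia.
- nia.
Qed.
End Bound.


Section Final.
Variable R : realType.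
Variables N W : nat.
Local Notation T := (basis N W).

Lemma pt_ineq (a b : R) : 2 * (a * b) <= 2/3 * a^+2 + 3/2 * b^+2.
Proof. have := sqr_ge0 (a - 3/2 * b); nra. Qed.

Lemma rip_sym (u v : state R N W) : rip u v = rip v u.
Proof. by rewrite /rip; apply: eq_bigr => s _; ring. Qed.

Lemma final_bound (u v : state R N W) (out : T -> bits N) (x y : bits N) :
  x != y -> rip u u = 1 -> rip v v = 1 ->
  2/3 <= \sum_(s | out s == x) sqnorm (u s) ->
  2/3 <= \sum_(s | out s == y) sqnorm (v s) ->
  rip u v <= 17/18.
Proof.
move=> nxy nu nv hx hy.
have sq0 : forall c : R[i], 0 <= sqnorm c by move=> c; rewrite /sqnorm addr_ge0 ?sqr_ge0.
have ripE : forall w : state R N W, rip w w = \sum_s sqnorm (w s).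
  by move=> w; rewrite /rip; apply: eq_bigr => s _; rewrite /sqnorm !expr2.
have hu : \sum_(s | out s == x) sqnorm (u s) + \sum_(s | out s != x) sqnorm (u s) = 1.
  by rewrite -nu ripE [in RHS](bigID (fun s => out s == x)).
have hv : \sum_(s | out s == x) sqnorm (v s) + \sum_(s | out s != x) sqnorm (v s) = 1.
  by rewrite -nv ripE [in RHS](bigID (fun s => out s == x)).
have hy' : \sum_(s | out s == y) sqnorm (v s) <= \sum_(s | out s != x) sqnorm (v s).
  rewrite [X in _ <= X]big_mkcond [X in X <= _]big_mkcond /=; apply: ler_sum => s _.
  case: (eqVneq (out s) y) => [->|_]; first by rewrite eq_sym nxy.
  by case: ifP.
rewrite /rip (bigID (fun s => out s == x)) /=.
have b1 : \sum_(s | out s == x) (complex.Re (u s) * complex.Re (v s) + complex.Im (u s) * complex.Im (v s))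
   <= \sum_(s | out s == x) (1/3 * sqnorm (u s) + 3/4 * sqnorm (v s)).
  apply: ler_sum => s _; rewrite /sqnorm.
  have := pt_ineq (complex.Re (u s)) (complex.Re (v s)).
  have := pt_ineq (complex.Im (u s)) (complex.Im (v s)); lra.
have b2 : \sum_(s | out s != x) (complex.Re (u s) * complex.Re (v s) + complex.Im (u s) * complex.Im (v s))
   <= \sum_(s | out s != x) (3/4 * sqnorm (u s) + 1/3 * sqnorm (v s)).
  apply: ler_sum => s _; rewrite /sqnorm.
  have := pt_ineq (complex.Re (v s)) (complex.Re (u s)).
  have := pt_ineq (complex.Im (v s)) (complex.Im (u s)); lra.
have e1 : \sum_(s | out s == x) (1/3 * sqnorm (u s) + 3/4 * sqnorm (v s)) = 1/3 * \sum_(s | out s == x) sqnorm (u s) + 3/4 * \sum_(s | out s == x) sqnorm (v s).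
  by rewrite big_split /= -!mulr_sumr.
have e2 : \sum_(s | out s != x) (3/4 * sqnorm (u s) + 1/3 * sqnorm (v s)) =
   3/4 * \sum_(s | out s != x) sqnorm (u s) + 1/3 * \sum_(s | out s != x) sqnorm (v s).
  by rewrite big_split /= -!mulr_sumr.
lra.
Qed.
End Final.

Section Norm.
Variable R : realType.
Variables N W : nat.
Local Notation T := (basis N W).

Lemma rip_init : rip (@init_state R N W) (@init_state R N W) = 1.
Proof.
rewrite /rip (bigD1 ([ffun => false], false, ord0)) //= big1.
  by rewrite /init_state eqxx /= addr0; simpl; ring.
move=> s /negbTE ns; rewrite /init_state ns /=; ring.
Qed.

Lemma oracle_norm (x : bits N) (u : state R N W) :
  rip (apply (qB_oracle R x) u) (apply (qB_oracle R x) u) = rip u u.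
Proof.
have := @oracle_step R N W x x u u (fun _ => 0) (fun _ => 0).
have h : forall q, Dp (pr0 R x q) (pr0 R x q) <= 0 * 0.
  by move=> q; rewrite Dp_same ?pr0_range // mulr0.
move=> /(_ (fun _ => lexx 0) (fun _ => lexx 0) h).
rewrite big1 => [H|q _]; last by rewrite big1 // => z _; rewrite !mul0r addr0.
apply/eqP; rewrite -subr_eq0 -normr_eq0; apply/eqP/le_anti.
by rewrite normr_ge0 andbT -(ler_pM2l (_ : (0:R) < 2)) // mulr0.
Qed.

Lemma run_norm (x : bits N) (U : nat -> op R N W) t :
  (forall i, (i <= t)%N -> unitary (U i)) -> rip (run x U t) (run x U t) = 1.
Proof.
elim: t => [|t IH] HU /=.
  by rewrite rip_apply ?rip_init //; apply: HU.
rewrite rip_apply; last exact: HU.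
by rewrite oracle_norm IH // => i it; apply: HU; apply: leqW.
Qed.
End Norm.


Section Trip.
Variable N : nat.
Variable K : nat.
Definition Tr := (bits N * 'I_N * 'I_N)%type.
Definition Pt (p : Tr) : bool := [&& cnt p.1.1 predT == K, p.1.1 p.1.2 & ~~ p.1.1 p.2].
Definition sig (p : Tr) : Tr := if Pt p then (sw p.1.1 p.1.2 p.2, p.2, p.1.2) else p.

Lemma Pt_sig p : Pt (sig p) = Pt p.
Proof.
rewrite /sig; case: ifP => // /and3P [/eqP cx xi nxj] /=.
have := cnt_sw predT xi nxj; rewrite /= => e.
rewrite /Pt /= sw_j // sw_i andbT.
apply/eqP; lia.
Qed.

Lemma sig_inv p : sig (sig p) = p.
Proof.
case Pp: (Pt p); last by rewrite /sig Pp Pp.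
rewrite {1}/sig Pt_sig Pp /sig Pp /=.
case/and3P: Pp => _ xi nxj.
by case: p xi nxj => [[x i] j] /= xi nxj; rewrite sw_swK.
Qed.

Lemma sig_inj : injective sig.
Proof. exact: (can_inj sig_inv). Qed.

Lemma sum_sig (R : realType) (F : Tr -> R) :
  \sum_(p | Pt p) F (sig p) = \sum_(p | Pt p) F p.
Proof.
rewrite [RHS](reindex_inj sig_inj) /=.
by apply: eq_bigl => p; rewrite Pt_sig.
Qed.

Lemma sum_trip (R : realType) (F : Tr -> R) :
  \sum_(p | Pt p) F p =
  \sum_(x : bits N | cnt x predT == K) \sum_(i | x i) \sum_(j | ~~ x j) F (x, i, j).
Proof.
rewrite big_mkcond /=.
rewrite (eq_bigr (fun p : Tr => (if Pt (p.1, p.2) then F (p.1, p.2) else 0))); last by case.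
rewrite -(pair_bigA _ (fun xi j => if Pt (xi, j) then F (xi, j) else 0)) /=.
rewrite (eq_bigr (fun xi : bits N * 'I_N => \sum_(j : 'I_N) (if Pt ((xi.1, xi.2), j) then F ((xi.1, xi.2), j) else 0))); last by case.
rewrite -(pair_bigA _ (fun x i => \sum_(j : 'I_N) (if Pt ((x, i), j) then F ((x, i), j) else 0))) /=.
rewrite [RHS]big_mkcond /=; apply: eq_bigr => x _.
case: ifP => cx.
  rewrite [RHS]big_mkcond /=; apply: eq_bigr => i _.
  case: ifP => xi.
    rewrite [RHS]big_mkcond /=; apply: eq_bigr => j _.
    by rewrite /Pt /= cx xi.
  by rewrite big1 // => j _; rewrite /Pt /= xi andbF.
by rewrite big1 // => i _; rewrite big1 // => j _; rewrite /Pt /= cx.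
Qed.
End Trip.


Section Main.
Variable R : realType.
Variables N W K T : nat.
Variable U : nat -> op R N W.
Hypothesis HU : forall i, (i <= T)%N -> unitary (U i).
Hypothesis K0 : (0 < K)%N.

Definition Mx (x : bits N) : nat := cnt (ncomp x) predT.
Definition Z : R := \sum_(x : bits N | cnt x predT == K) ((K * Mx x)%N)%:R.
Definition Phi (t : nat) : R :=
  \sum_(p : Tr N | Pt K p) rip (run p.1.1 U t) (run (sig K p).1.1 U t).
Definition delta : R := 4 / Num.sqrt (Num.sqrt (K%:R)).

Lemma sum_one (x : bits N) :
  \sum_(i | x i) \sum_(j | ~~ x j) (1 : R) = ((cnt x predT * Mx x)%N)%:R.
Proof.
under eq_bigr => i _ do rewrite sum_const_card mulr1.
rewrite sum_const_card natrM; congr (_%:R * _%:R).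
  by apply: eq_card => l; rewrite !inE andbT.
by apply: eq_card => l; rewrite !inE ffunE andbT.
Qed.

Lemma Z_sum : \sum_(p : Tr N | Pt K p) (1 : R) = Z.
Proof.
rewrite (@sum_trip N K R) /Z; apply: eq_bigr => x /eqP cx.
by rewrite sum_one cx.
Qed.

Lemma Phi0 : Phi 0 = Z.
Proof.
rewrite /Phi -Z_sum; apply: eq_bigr => p _ /=.
have := @run_norm R N W p.1.1 U 0 (fun i hi => HU (leq_trans hi (leq0n T))).
by rewrite /=.
Qed.

Lemma rip_Bl (u : state R N W) :
  rip u u = \sum_(q : bits N) \sum_(z : 'I_W.+1) Bl u q z.
Proof.
rewrite /rip sum_basis; apply: eq_bigr => q _; apply: eq_bigr => z _.
by rewrite /Bl /sqnorm !expr2.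
Qed.

Lemma Phi_step t : (t < T)%N -> `|Phi t.+1 - Phi t| <= delta * Z.
Proof.
move=> tT.
have HUt : forall i, (i <= t)%N -> unitary (U i) by move=> i it; apply: HU; lia.
set G := fun p : Tr N => \sum_(q : bits N) \sum_(z : 'I_W.+1)
            ff R p.1.1 p.1.2 p.2 q * Bl (run p.1.1 U t) q z.
have H1 : 2 * `|Phi t.+1 - Phi t| <= \sum_(p : Tr N | Pt K p) (G p + G (sig K p)).
  rewrite /Phi -sumrB.
  apply: (le_trans (y := \sum_(p : Tr N | Pt K p) 2 * `|rip (run p.1.1 U t.+1) (run (sig K p).1.1 U t.+1)
       - rip (run p.1.1 U t) (run (sig K p).1.1 U t)|)).
    rewrite -mulr_sumr ler_pM2l //; exact: ler_norm_sum.
  apply: ler_sum => p Pp.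
  have Psig := Pp; rewrite -(Pt_sig K p) in Psig.
  case/and3P: (Pp) => _ xi nxj.
  rewrite /= rip_apply; last exact: HU.
  have -> : sig K p = (sw p.1.1 p.1.2 p.2, p.2, p.1.2) by rewrite /sig Pp.
  apply: (le_trans (@oracle_step R N W _ _ _ _ (ff R p.1.1 p.1.2 p.2) (ff R (sw p.1.1 p.1.2 p.2) p.2 p.1.2) _ _ _)).
  - by move=> q; apply: ff_ge0.
  - by move=> q; apply: ff_ge0.
  - by move=> q; apply: prod_ff.
  rewrite /G /= -big_split /=; apply: ler_sum => q _.
  by rewrite -big_split.
have H2 : \sum_(p : Tr N | Pt K p) G p <= delta * Z.
  rewrite (@sum_trip N K R) /Z mulr_sumr; apply: ler_sum => x /eqP cx.
  rewrite /G /=.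
  have -> : \sum_(i | x i) \sum_(j | ~~ x j) \sum_(q : bits N) \sum_(z : 'I_W.+1)
       ff R x i j q * Bl (run x U t) q z =
     \sum_(q : bits N) (\sum_(i | x i) \sum_(j | ~~ x j) ff R x i j q) *
          \sum_(z : 'I_W.+1) Bl (run x U t) q z.
    under eq_bigr => i _ do under eq_bigr => j _ do under eq_bigr => q _ do rewrite -mulr_sumr.
    under eq_bigr => i _ do rewrite exchange_big /=.
    rewrite exchange_big /=; apply: eq_bigr => q _.
    rewrite mulr_suml; apply: eq_bigr => i _; by rewrite mulr_suml.
  apply: (le_trans (y := \sum_(q : bits N) delta * (K * Mx x)%:R *
          \sum_(z : 'I_W.+1) Bl (run x U t) q z)).
    apply: ler_sum => q _; apply: ler_wpM2r.
      by apply: sumr_ge0 => z _; rewrite /Bl /sqnorm !addr_ge0 ?sqr_ge0.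
    have := sum_ff_bound R q (_ : (0 < cnt x predT)%N); rewrite cx => /(_ K0).
    by rewrite /delta /Mx natrM mulrA.
  rewrite -mulr_sumr -rip_Bl run_norm ?mulr1 //.
have H3 : \sum_(p : Tr N | Pt K p) (G p + G (sig K p)) = 2 * \sum_(p : Tr N | Pt K p) G p.
  rewrite big_split /= (@sum_sig N K R G); ring.
rewrite H3 in H1; lra.
Qed.

Lemma telescope t : (t <= T)%N -> Z - Phi t <= t%:R * (delta * Z).
Proof.
elim: t => [|t IH] tT; first by rewrite Phi0 subrr mul0r.
have h1 := IH (ltnW tT).
have h2 := Phi_step tT.
have h3 : Phi t - Phi t.+1 <= `|Phi t.+1 - Phi t| by rewrite distrC ler_norm.
rewrite -natr1 mulrDl mul1r; lra.
Qed.

Variable out : basis N W -> bits N.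
Hypothesis Hsucc : forall x : bits N, wt x = K -> 2 / 3 <= success_prob x U T out.

Lemma PhiT : Phi T <= 17/18 * Z.
Proof.
rewrite /Phi -Z_sum mulr_sumr; apply: ler_sum => p Pp.
have Pp' := Pp; case/and3P: Pp' => /eqP cx xi nxj.
have -> : sig K p = (sw p.1.1 p.1.2 p.2, p.2, p.1.2) by rewrite /sig Pp.
rewrite mulr1 /=.
have HUT : forall i, (i <= T)%N -> unitary (U i) by [].
apply: (final_bound (out := out) (x := p.1.1) (y := sw p.1.1 p.1.2 p.2)).
- apply/negP => /eqP e; have := sw_i p.1.1 p.1.2 p.2; rewrite -e xi //.
- exact: run_norm.
- exact: run_norm.
- by apply: Hsucc; rewrite wt_cnt.
- apply: Hsucc; rewrite wt_cnt; have := cnt_sw predT xi nxj; rewrite /= -cx => /eqP; rewrite eqn_add2r => /eqP. move=> e; exact: e.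
Qed.
End Main.

Section Zpos.
Variable R : realType.
Variables N K : nat.

Lemma exists_x0 : (K < N)%N -> exists x : bits N, cnt x predT = K /\ (0 < cnt (ncomp x) predT)%N.
Proof.
move=> KN.
exists [ffun l : 'I_N => (l < K)%N]; split.
  rewrite cntE.
  rewrite (eq_bigr (fun l : 'I_N => ((l < K)%N : nat))); last by move=> l _; rewrite ffunE andbT.
  rewrite -(big_mkord xpredT (fun l => ((l < K)%N : nat))).
  rewrite (big_cat_nat _ (n := K)) //=; last exact: ltnW.
  rewrite [X in (_ + X)%N]big1_seq ?addn0; last first.
    by move=> l /andP [_]; rewrite mem_index_iota => /andP [h _]; rewrite ltnNge h.
  rewrite (eq_big_nat _ _ (F2 := fun _ => 1%N)); last by move=> l /andP [_ ->].
  by rewrite sum_nat_const_nat subn0 muln1.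
apply: (cnt_pos (l := Ordinal KN)) => //.
by rewrite ncompE ffunE /= ltnn.
Qed.
End Zpos.
Theorem theorem4 (R : realType) :
  exists c : R, 0 < c /\
  forall (N k : nat), (1 <= k)%N -> (2 * k < N)%N ->
  forall (W T : nat) (U : nat -> op R N W) (out : basis N W -> bits N),
    (forall i, (i <= T)%N -> unitary (U i)) ->
    (forall x : bits N, wt x = k -> 2 / 3 <= success_prob x U T out) ->
    c * Num.sqrt (Num.sqrt (k%:R)) <= T%:R.
Proof.
exists (1/72); split; first by rewrite divr_gt0.
move=> N k k1 kN W T U out HU Hs.
have KN : (k < N)%N by lia.
have [x0 [cx0 mx0]] := exists_x0 KN.
have Zp : 0 < Z R N k.
  rewrite /Z (bigD1 x0) /=; last by rewrite cx0.
  apply: ltr_pwDl; first by rewrite ltr0n muln_gt0 k1.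
  by apply: sumr_ge0 => x _; rewrite ler0n.
have h1 := PhiT HU Hs.
have h2 := telescope HU k1 (leqnn T).
have hz : Z R N k / 18 <= T%:R * delta R k * Z R N k by rewrite -mulrA; lra.
have h3 : 1 / 18 <= T%:R * delta R k.
  by rewrite -(ler_pM2r Zp) mul1r mulrC.
have s0 : 0 < Num.sqrt (Num.sqrt (k%:R : R)) by rewrite !sqrtr_gt0 ltr0n.
move: h3; rewrite /delta.
set s := Num.sqrt (Num.sqrt (k%:R : R)) in s0 *.
move=> h3.
have : s / 18 <= 4 * T%:R.
  have := ler_wpM2r (ltW s0) h3.
  move=> h4; have e : T%:R * (4 / s) * s = 4 * T%:R by field; rewrite gt_eqF.
  rewrite e in h4; lra.
lra.
Qed.
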